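(* Let $G$ be a compact semi-simple Lie group. Then $G$ cannot carry any structure of locally Kundt Lie group, i.e. for no left invariant Lorentzian metric $g$ on $G$ is $(G,g)$ a locally Kundt Lie group.
   Context: For a Lie group $G$ with a left invariant Lorentzian metric $g$ and Levi-Civita connection $\nabla$, $(G,g)$ is a locally Kundt Lie group if there exist a non-singular left invariant vector field $V$ with $g(V,V)=0$ and a $1$-form $\alpha$ such that $\nabla_XV=\alpha(X)V$ for all vector fields $X$ orthogonal to $V$. *)

(* Defs.v *)
From mathcomp Require Import all_boot all_order all_algebra.
From mathcomp Require Import reals.
Set Implicit Arguments. Unset Strict Implicit. Unset Printing Implicit Defensive.
Import Order.TTheory GRing.Theory Num.Theory.
Local Open Scope ring_scope.

(* The Lie algebra of an n-dimensional Lie group G is modelled on 'rV[R]_n,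
   identified with the left-invariant vector fields of G. *)
Section Defs.
Variable R : realType.
Variable n : nat.
Notation V := 'rV[R]_n.

(* br is a Lie bracket: bilinear (left-linear + antisymmetric), Jacobi. *)
Definition is_lie_bracket (br : V -> V -> V) : Prop :=
  [/\ forall (a : R) (u v w : V), br (a *: u + v) w = a *: br u w + br v w,
      forall u v : V, br u v = - br v u
    & forall u v w : V, br u (br v w) + br v (br w u) + br w (br u v) = 0].

Definition ad_mx (br : V -> V -> V) (x : V) : 'M[R]_n := lin1_mx (br x).

Definition killing (br : V -> V -> V) (x y : V) : R :=
  \tr (ad_mx br x *m ad_mx br y).

Definition bform (S : 'M[R]_n) (u v : V) : R := (u *m S *m v^T) 0 0.

(* semisimple (Cartan's criterion): Killing form nondegenerate *)
Definition semisimple_lie (br : V -> V -> V) : Prop :=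
  forall x : V, (forall y : V, killing br x y = 0) -> x = 0.

(* compact Lie algebra (Lie algebra of a compact Lie group): admits an
   ad-invariant (positive definite) inner product *)
Definition compact_lie (br : V -> V -> V) : Prop :=
  exists Q : 'M[R]_n,
    [/\ Q^T = Q,
        forall u : V, u != 0 -> 0 < bform Q u u
      & forall x y z : V, bform Q (br x y) z + bform Q y (br x z) = 0].

(* a left-invariant Lorentzian metric: symmetric, of signature (-,+,...,+) *)
Definition lorentzian (S : 'M[R]_n) : Prop :=
  S^T = S /\
  exists P : 'M[R]_n, P \in unitmx /\
    P *m S *m P^T = diag_mx (\row_(i < n) if val i == 0%N then -1 else 1).

(* Levi-Civita connection restricted to left-invariant vector fields:
   torsion-free and metric (this determines it uniquely, Koszul). *)
Definition levi_civita (br : V -> V -> V) (S : 'M[R]_n) (nabla : V -> V -> V)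
  : Prop :=
  (forall u v : V, nabla u v - nabla v u = br u v) /\
  (forall u v w : V, bform S (nabla u v) w + bform S v (nabla u w) = 0).

Definition locally_kundt (S : 'M[R]_n) (nabla : V -> V -> V) : Prop :=
  exists (v : V) (alpha : 'cV[R]_n),
    [/\ v != 0, bform S v v = 0
      & forall x : V, bform S x v = 0 -> nabla x v = (x *m alpha) 0 0 *: v].

End Defs.

(* Main.v *)
Require Import Defs.
From mathcomp Require Import all_boot all_order all_algebra.
From mathcomp Require Import reals.
From mathcomp Require Import lra.
Import Order.TTheory GRing.Theory Num.Theory.
Local Open Scope ring_scope.

Section Aux.
Variable R : realType.
Variable n : nat.
Notation V := 'rV[R]_n.

Lemma bformDZl (S : 'M[R]_n) (a : R) (u v w : V) :
  bform S (a *: u + v) w = a * bform S u w + bform S v w.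
Proof. by rewrite /bform !mulmxDl -!scalemxAl !mxE. Qed.

Lemma bformZr (S : 'M[R]_n) (a : R) (u w : V) :
  bform S u (a *: w) = a * bform S u w.
Proof. by rewrite /bform linearZ /= -scalemxAr mxE. Qed.

Lemma bformDZr (S : 'M[R]_n) (a : R) (u v w : V) :
  bform S w (a *: u + v) = a * bform S w u + bform S w v.
Proof. by rewrite /bform linearD linearZ /= mulmxDr -scalemxAr !mxE. Qed.

Lemma bform_sym (S : 'M[R]_n) (u v : V) : S^T = S -> bform S u v = bform S v u.
Proof.
move=> HS; rewrite /bform -[in LHS](trmxK (u *m S *m v^T)) mxE.
by rewrite !trmx_mul trmxK HS mulmxA.
Qed.

Lemma bformB (S : 'M[R]_n) (u v w : V) :
  bform S (u - v) w = bform S u w - bform S v w.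
Proof.
have -> : u - v = (-1) *: v + u by rewrite scaleN1r addrC.
by rewrite bformDZl; lra.
Qed.

Lemma vec_self_opp (x : V) : x = - x -> x = 0.
Proof.
move=> h; apply/matrixP => i j; move/matrixP: h => /(_ i j); rewrite !mxE.
by move=> h; lra.
Qed.

Lemma posdef_unit (Q : 'M[R]_n) :
  (forall u : V, u != 0 -> 0 < bform Q u u) -> Q \in unitmx.
Proof.
move=> hQ; apply: contraT => hn.
have hK : kermx Q != 0 by rewrite kermx_eq0 row_free_unit.
have [i hi] : exists i, row i (kermx Q) != 0.
  apply/existsP; apply: contraT; rewrite negb_exists => /forallP h.
  suff hk0 : kermx Q = 0 by rewrite hk0 eqxx in hK.
  apply/row_matrixP => i.
  by move: (h i); rewrite negbK row0 => /eqP.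
have := hQ _ hi; rewrite /bform -row_mul mulmx_ker row0 mul0mx mxE.
by rewrite ltxx.
Qed.

End Aux.

Theorem corollary3p4 (R : realType) (n : nat)
  (br : 'rV[R]_n -> 'rV[R]_n -> 'rV[R]_n)
  (Hlie : is_lie_bracket br)
  (Hcompact : compact_lie br) (Hss : semisimple_lie br)
  (S : 'M[R]_n) (HS : lorentzian S)
  (nabla : 'rV[R]_n -> 'rV[R]_n -> 'rV[R]_n) (HLC : levi_civita br S nabla) :
  ~ locally_kundt S nabla.
Proof.
case=> v [alpha [hv0 _ hK]].
case: Hlie => Hlin Hanti _.
case: Hcompact => Q [QT Qpos Qinv].
case: HLC => Htor Hmet.
case: HS => _ [P [Pu PSP]].
set f := fun y => bform S y v.
have sub : forall x z, f x = 0 -> f z = 0 -> f (br x z) = 0.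
  move=> x z hx hz; rewrite /f -Htor bformB.
  have hm : forall a b c, bform S (nabla a b) c = - bform S b (nabla a c).
    by move=> a b c; apply/eqP; rewrite -addr_eq0 Hmet.
  rewrite !hm (hK x hx) (hK z hz) !bformZr.
  by move: hx hz; rewrite /f => -> ->; rewrite !mulr0 oppr0 subrr.
have Su : S \in unitmx.
  have : P *m S *m P^T \in unitmx.
    rewrite PSP unitmxE det_diag unitfE; apply/prodf_neq0 => i _.
    by rewrite mxE; case: ifP => _; rewrite ?oppr_eq0 oner_eq0.
  by rewrite !unitmx_mul => /andP [/andP [] ].
set c := S *m v^T.
have c0 : c != 0.
  apply: contraNN hv0 => /eqP hc; apply/eqP.
  by rewrite -(trmxK v) -(mulKmx Su v^T) -/c hc mulmx0 trmx0.
have Qu := @posdef_unit _ _ _ Qpos.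
set w := c^T *m invmx Q.
have key : forall y, bform Q w y = f y.
  move=> y; rewrite /bform /w mulmxKV // -trmx_mul mxE /f /bform /c.
  by rewrite -mulmxA.
have w0 : w != 0.
  apply: contraNN c0 => /eqP hw; apply/eqP.
  by rewrite -(trmxK c) -(mulmxKV Qu c^T) -/w hw mul0mx trmx0.
have fw : 0 < f w by rewrite -key; exact: Qpos.
have decomp : forall y, f (y - (f y / f w) *: w) = 0.
  move=> y.
  have -> : y - (f y / f w) *: w = (- (f y / f w)) *: w + y
    by rewrite scaleNr addrC.
  rewrite /f bformDZl -/(f w) -/(f y).
  by rewrite mulNr divfK ?gt_eqF // addNr.
have st5 : forall x, f x = 0 -> br x w = 0.
  move=> x hx.
  have orth : forall y, bform Q (br x w) y = 0.
    move=> y; set t := f y / f w.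
    have -> : y = t *: w + (y - t *: w) by rewrite addrC subrK.
    rewrite bformDZr.
    have h1 : bform Q (br x w) w = 0.
      by have := Qinv x w w; rewrite [bform Q w _]bform_sym // => h; lra.
    have h2 : bform Q (br x w) (y - t *: w) = 0.
      by have := Qinv x w (y - t *: w); rewrite key (sub _ _ hx (decomp y)) addr0.
    by rewrite h1 h2 mulr0 addr0.
  apply/eqP; apply: contraT => hne; have := Qpos _ hne.
  by rewrite orth ltxx.
have st6 : forall x, br x w = 0.
  move=> x; set t := f x / f w.
  have -> : x = t *: w + (x - t *: w) by rewrite addrC subrK.
  rewrite Hlin (st5 _ (decomp x)) addr0.
  have -> : br w w = 0 by apply: vec_self_opp; exact: Hanti.
  by rewrite scaler0.
have had : ad_mx br w = 0.
  by apply/matrixP => i j; rewrite /ad_mx /lin1_mx !mxE Hanti st6 oppr0 mxE.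
have : w = 0.
  by apply: Hss => y; rewrite /killing had mul0mx mxtrace0.
by move=> hw; rewrite hw eqxx in w0.
Qed.
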